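(* For $w>0$, as an identity of formal power series in $z$, \[\mathrm{DAG}(z,w,u)=1+\frac{\mathcal H(z,w,u)}{1-\mathcal H\!\left(z,w,\frac w{1+w}\right)},\qquad\text{where }\ \mathcal H(z,w,u)=z\int_0^u \mathrm{DAG}\!\left(\frac z{1+w},w,t\right)dt.\]
   Context: For a labelled DAG $G$ (directed acyclic graph on vertex set $\{1,\dots,n\}$, $n\ge0$), $v(G),e(G),s(G)$ denote its numbers of vertices, edges and sources (vertices of in-degree $0$). $\mathrm{DAG}(z,w,u)=\sum_G \frac{z^{v(G)}w^{e(G)}u^{s(G)}}{(1+w)^{\binom{v(G)}{2}}v(G)!}$, summed over all labelled DAGs. (It is known that $\mathrm{DAG}(z,w,u)=\mathrm{Set}((u-1)z,w)/\mathrm{Set}(-z,w)$ with $\mathrm{Set}(z,w)=\sum_{n\ge0}\frac{z^n}{(1+w)^{\binom n2}n!}$.) *)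

(* Defs.v *)
From Stdlib Require Import Reals.
From Coquelicot Require Import Coquelicot.
From mathcomp Require Import ssreflect ssrfun ssrbool eqtype ssrnat seq
  choice fintype finset fingraph bigop binomial.

Set Implicit Arguments.
Unset Strict Implicit.
Unset Printing Implicit Defensive.

(* A directed graph on 'I_n is its set of arcs (x,y) meaning x -> y. *)
Definition digraph (n : nat) := {set 'I_n * 'I_n}.

Definition arc (n : nat) (E : digraph n) : rel 'I_n := fun a b => (a, b) \in E.

(* acyclic: no arc x -> y such that y reaches x (this also excludes loops) *)
Definition is_dag (n : nat) (E : digraph n) : bool :=
  [forall x : 'I_n, forall y : 'I_n, arc E x y ==> ~~ connect (arc E) y x].

Definition nedges (n : nat) (E : digraph n) : nat := #|E|.

Definition nsources (n : nat) (E : digraph n) : nat :=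
  #|[set v : 'I_n | [forall a : 'I_n, ~~ arc E a v]]|.

Definition fps := nat -> R.

Definition fps_one : fps := fun n => if n is 0 then 1%R else 0%R.
Definition fps_add (a b : fps) : fps := fun n => (a n + b n)%R.
Definition fps_sub (a b : fps) : fps := fun n => (a n - b n)%R.
Definition fps_mul (a b : fps) : fps :=
  fun n => \big[Rplus/0%R]_(k < n.+1) (a k * b (n - k)%N)%R.

Definition fps_zmul (a : fps) : fps := fun n => if n is m.+1 then a m else 0%R.

Definition fps_scale (c : R) (a : fps) : fps := fun n => (c ^ n * a n)%R.

Definition fps_int (F : R -> fps) (lo hi : R) : fps :=
  fun n => RInt (fun t => F t n) lo hi.

Fixpoint fps_inv_list (a : fps) (n : nat) : seq R :=
  match n with
  | 0 => [:: (/ a 0%N)%R]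
  | m.+1 =>
      let l := fps_inv_list a m in
      rcons l (- / a 0%N *
               \big[Rplus/0%R]_(k < m.+1) (a k.+1 * nth 0%R l (m - k)%N))%R
  end.

Definition fps_inv (a : fps) : fps := fun n => nth 0%R (fps_inv_list a n) n.

Definition fps_div (a b : fps) : fps := fps_mul a (fps_inv b).

Definition DAG_coef (w u : R) (n : nat) : R :=
  ((\big[Rplus/0%R]_(E : digraph n | is_dag E)
      (w ^ nedges E * u ^ nsources E))
   / ((1 + w) ^ 'C(n, 2) * INR n`!))%R.

Definition DAG (w u : R) : fps := fun n => DAG_coef w u n.

Definition H (w u : R) : fps :=
  fps_zmul (fps_int (fun t => fps_scale (/ (1 + w)) (DAG w t)) 0 u).

(* Main.v *)
From HB Require Import structures.
Require Import Defs.
From Stdlib Require Import Reals Lra FunctionalExtensionality.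
From Coquelicot Require Import Coquelicot.
From mathcomp Require Import ssreflect ssrfun ssrbool eqtype ssrnat seq
  choice fintype finset fingraph bigop binomial.
From mathcomp Require Import zify.

Set Implicit Arguments.
Unset Strict Implicit.
Unset Printing Implicit Defensive.


Lemma Rplus_assoc' : associative Rplus.
Proof. by move=> x y z; rewrite Rplus_assoc. Qed.
Lemma Rmult_assoc' : associative Rmult.
Proof. by move=> x y z; rewrite Rmult_assoc. Qed.
HB.instance Definition _ := Monoid.isComLaw.Build R 0%R Rplus Rplus_assoc' Rplus_comm Rplus_0_l.
HB.instance Definition _ := Monoid.isComLaw.Build R 1%R Rmult Rmult_assoc' Rmult_comm Rmult_1_l.
HB.instance Definition _ := Monoid.isMulLaw.Build R 0%R Rmult Rmult_0_l Rmult_0_r.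
HB.instance Definition _ := Monoid.isAddLaw.Build R Rmult Rplus Rmult_plus_distr_r Rmult_plus_distr_l.

Section Graph.
Variable T : finType.
Implicit Types (E : {set T * T}) (X V : {set T}).

Definition dagb E : bool :=
  [forall X : {set T}, (X != set0) ==>
     [exists v in X, [forall a in X, (a, v) \notin E]]].

Definition srcs E V : {set T} := [set v in V | [forall a, (a, v) \notin E]].

Definition rarc E : rel T := fun a b => (a, b) \in E.

Lemma connect_fwd (e : rel T) (A : {pred T}) x y :
  (forall u v, u \in A -> e u v -> v \in A) -> x \in A -> connect e x y -> y \in A.
Proof.
move=> cl xA /connectP [p pp ->]; elim: p x xA pp => [|z p IH] x xA //= /andP [exz pz].
by apply: IH pz; apply: cl exz.
Qed.

Lemma connect_last (e : rel T) x y : connect e x y -> y != x ->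
  exists p, connect e x p /\ e p y.
Proof.
move=> cxy yx.
pose A := [pred z | (z == x) || [exists p, connect e x p && e p z]].
have : y \in A.
  apply: (connect_fwd (A := A)) cxy; last by rewrite inE eqxx.
  move=> u v; rewrite !inE => /orP [/eqP -> | /existsP [p /andP [cp ep]]] euv;
    apply/orP; right; apply/existsP.
    by exists x; rewrite connect0.
  by exists u; rewrite euv (connect_trans cp (connect1 ep)).
rewrite inE (negbTE yx) /= => /existsP [p /andP [cp ep]]; by exists p.
Qed.

Lemma dagbP E : dagb E ->
  forall X, X != set0 -> exists2 v, v \in X & forall a, a \in X -> (a, v) \notin E.
Proof.
move=> /forallP H X /(implyP (H X)) /existsP [v /andP [vX /forallP Hv]].
by exists v => // a aX; apply: (implyP (Hv a)).
Qed.

Lemma dagbI E : (forall X, X != set0 -> exists2 v, v \in X & forall a, a \in X -> (a, v) \notin E) -> dagb E.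
Proof.
move=> H; apply/forallP => X; apply/implyP => /H [v vX Hv].
apply/existsP; exists v; rewrite vX /=; apply/forallP => a; apply/implyP; exact: Hv.
Qed.

Lemma dagb_sub E E' : E' \subset E -> dagb E -> dagb E'.
Proof.
move=> sub /dagbP H; apply: dagbI => X /H [v vX Hv]; exists v => // a aX.
by apply/negP => /(subsetP sub); apply/negP; apply: Hv.
Qed.

Lemma dagb_src E : dagb E -> [set: T] != set0 -> srcs E setT != set0.
Proof.
move=> /dagbP H /H [v _ Hv]; apply/set0Pn; exists v; rewrite !inE /=.
apply/forallP => a; exact: Hv.
Qed.

End Graph.

Lemma is_dagE n (E : digraph n) : is_dag E = dagb E.
Proof.
apply/idP/idP.
- move=> /forallP D; apply: dagbI => X /set0Pn [x0 x0X].
  pose anc v := #|[set y | connect (arc E) y v]|.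
  case: (@arg_minnP _ x0 (mem X) anc x0X) => v vX vmin.
  exists v => // a aX; apply/negP => av.
  have := vmin a aX; rewrite leqNgt => /negP; apply; apply: proper_card.
  apply/properP; split.
    apply/subsetP => y; rewrite !inE => cya.
    exact: (connect_trans cya (connect1 (av : arc E a v))).
  exists v; first by rewrite inE connect0.
  rewrite inE; apply/negP => cva.
  by have := implyP ((forallP (D a)) v) av; rewrite cva.
- move=> /dagbP H; apply/forallP => x; apply/forallP => y; apply/implyP => axy.
  apply/negP => cyx.
  pose X := [set z | connect (arc E) y z && connect (arc E) z x].
  have : X != set0 by apply/set0Pn; exists y; rewrite inE connect0.
  move=> /H [v]; rewrite inE => /andP [cyv cvx] Hv.
  case: (eqVneq v y) => [vy | vy].
    subst v; have xX : x \in X by rewrite inE cyx connect0.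
    by move/negP: (Hv x xX); apply.
  have [p [cyp epv]] := connect_last cyv vy.
  have pX : p \in X by rewrite inE cyp (connect_trans (connect1 epv) cvx).
  by move/negP: (Hv p pX); apply.
Qed.


Lemma iter_Rmult n a : iter n (Rmult a) 1%R = (a ^ n)%R.
Proof. by elim: n => //= n ->. Qed.

Lemma iter_Rplus n a : iter n (Rplus a) 0%R = (INR n * a)%R.
Proof. elim: n => [|n IH]; first by rewrite /=; lra. by rewrite iterS IH -addn1 plus_INR /=; lra. Qed.

Lemma prod_const (K : finType) (P : pred K) a :
  \big[Rmult/1%R]_(i | P i) a = (a ^ #|P|)%R.
Proof. by rewrite big_const iter_Rmult. Qed.

Lemma prod_constS (K : finType) (A : {set K}) a :
  \big[Rmult/1%R]_(i in A) a = (a ^ #|A|)%R.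
Proof. by rewrite big_const iter_Rmult. Qed.

Lemma prod_zero (K : finType) (h : K -> R) i0 : h i0 = 0%R ->
  \big[Rmult/1%R]_i h i = 0%R.
Proof. by move=> h0; rewrite (bigD1 i0) //= h0 Rmult_0_l. Qed.

Lemma sum_subsets (K : finType) (a : R) (Rs B : {set K}) : Rs \subset B ->
  \big[Rplus/0%R]_(F : {set K} | (Rs \subset F) && (F \subset B)) (a ^ #|F|)%R
  = (a ^ #|Rs| * (1 + a) ^ (#|B| - #|Rs|))%R.
Proof.
move=> RB.
pose Fi i := if i \in B then a else 0%R.
pose Gi i := if i \in Rs then 0%R else 1%R.
have := @bigA_distr R 0%R 1%R Rmult Rplus K Fi Gi.
rewrite /= => HD.
transitivity (\big[Rplus/0%R]_(J in {set K})
      \big[Rmult/1%R]_i (if i \in J then Fi i else Gi i)).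
  rewrite big_mkcond /=; apply: eq_bigr => F _.
  case: ifP => [/andP [RF FB] | ncond].
    rewrite -prod_constS big_mkcond /=; apply: eq_bigr => i _.
    rewrite /Fi /Gi; case: ifP => iF; first by rewrite (subsetP FB _ iF).
    by case: ifP => // iR; rewrite (subsetP RF _ iR) in iF.
  symmetry; move/negbT: ncond; rewrite negb_and => /orP [] /subsetPn [i i1 i2].
    by apply: (prod_zero (i0 := i)); rewrite (negbTE i2) /Gi i1.
  by apply: (prod_zero (i0 := i)); rewrite i1 /Fi (negbTE i2).
rewrite -HD (bigID (mem Rs)) /=.
have -> : \big[Rmult/1%R]_(i | i \in Rs) (Fi i + Gi i)%R = (a ^ #|Rs|)%R.
  rewrite -prod_const; apply: eq_bigr => i iR.
  by rewrite /Fi /Gi iR (subsetP RB _ iR) Rplus_0_r.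
congr (_ * _)%R.
transitivity (\big[Rmult/1%R]_(i | (i \notin Rs) && (i \in B)) (1 + a)%R).
  rewrite big_mkcondr /=; apply: eq_bigr => i iR.
  by rewrite /Fi /Gi (negbTE iR); case: (i \in B); lra.
rewrite prod_const -cardsDS //; congr (_ ^ _)%R.
by apply: eq_card => i; rewrite [in RHS]inE unfold_in /= andbC.
Qed.

Lemma sum_split (K : finType) (A B : {set K}) (G : {set K} -> R) :
  A :&: B = set0 ->
  \big[Rplus/0%R]_(E : {set K} | E \subset A :|: B) G E =
  \big[Rplus/0%R]_(E1 : {set K} | E1 \subset A)
     \big[Rplus/0%R]_(E2 : {set K} | E2 \subset B) G (E1 :|: E2).
Proof.
move=> AB0.
rewrite pair_big_dep /=.
rewrite (reindex_onto (fun p : {set K} * {set K} => p.1 :|: p.2)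
                      (fun E => (E :&: A, E :&: B))) /=; last first.
  by move=> E EAB; rewrite -setIUr; apply/setIidPl.
apply: eq_bigl => [[E1 E2]] /=.
apply/idP/idP.
  move=> /andP [_ /eqP [<- <-]]; by rewrite !subsetIr.
move=> /andP [E1A E2B].
have h1 : (E1 :|: E2) :&: A = E1.
  rewrite setIUl (setIidPl E1A).
  suff -> : E2 :&: A = set0 by rewrite setU0.
  apply/eqP; rewrite -subset0 -AB0; apply/subsetP => x; rewrite !inE => /andP [xE xA].
  by rewrite xA (subsetP E2B _ xE).
have h2 : (E1 :|: E2) :&: B = E2.
  rewrite setIUl (setIidPl E2B).
  suff -> : E1 :&: B = set0 by rewrite set0U.
  apply/eqP; rewrite -subset0 -AB0; apply/subsetP => x; rewrite !inE => /andP [xE xB].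
  by rewrite xB (subsetP E1A _ xE).
by rewrite h1 h2 eqxx andbT setUSS.
Qed.


Definition Aw (T : finType) (w u : R) (V : {set T}) : R :=
  \big[Rplus/0%R]_(E : {set T * T} | (E \subset setX V V) && dagb E)
     (w ^ #|E| * u ^ #|srcs E V|)%R.

Section Relabel.
Variables (T1 T2 : finType) (f : T1 -> T2) (finj : injective f).

Definition pf (p : T1 * T1) : T2 * T2 := (f p.1, f p.2).
Lemma pf_inj : injective pf.
Proof. by move=> [a b] [c d] [/finj -> /finj ->]. Qed.

Lemma dagb_imset (E : {set T1 * T1}) : dagb (pf @: E) = dagb E.
Proof.
apply/idP/idP.
- move=> /dagbP H; apply: dagbI => X /set0Pn [x xX].
  have : f @: X != set0 by apply/set0Pn; exists (f x); apply: imset_f.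
  move=> /H [v' /imsetP [v vX ->] Hv]; exists v => // a aX.
  apply/negP => av; have := Hv (f a) (imset_f _ aX).
  by rewrite (imset_f pf av).
- move=> /dagbP H; apply: dagbI => X' /set0Pn [y yX'].
  case: (boolP [exists y', (y' \in X') && (y' \notin f @: setT)]).
    move=> /existsP [y' /andP [y'X ny']]; exists y' => // a _.
    apply/negP => /imsetP [p _ [_ e]].
    by move: ny'; rewrite e imset_f // inE.
  move=> /existsPn nall.
  have inim z : z \in X' -> exists2 x, z = f x & x \in f @^-1: X'.
    move=> zX; move: (nall z); rewrite zX /= negbK => /imsetP [x _ e].
    by exists x => //; rewrite inE -e.
  have [x0 _ x0X] := inim y yX'.
  have : f @^-1: X' != set0 by apply/set0Pn; exists x0.
  move=> /H [v vX Hv]; exists (f v); first by move: vX; rewrite inE.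
  move=> a aX'; apply/negP => /imsetP [[p1 p2] pE [e1 e2]].
  move/finj: e2 => e2; subst.
  have p1X : p1 \in f @^-1: X' by rewrite inE.
  by move/negP: (Hv p1 p1X); apply.
Qed.

Lemma srcs_imset (E : {set T1 * T1}) (V : {set T1}) :
  srcs (pf @: E) (f @: V) = f @: srcs E V.
Proof.
apply/setP => y; apply/idP/idP.
- rewrite inE => /andP [/imsetP [v vV ->] /forallP Hv].
  apply: imset_f; rewrite inE vV /=; apply/forallP => a.
  apply/negP => av; have := Hv (f a).
  by rewrite (imset_f pf av).
- move=> /imsetP [v]; rewrite inE => /andP [vV /forallP Hv] ->.
  rewrite inE imset_f //=; apply/forallP => a'.
  apply/negP => /imsetP [[p1 p2] pE [e1 e2]].
  move/finj: e2 => e2; subst.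
  by move/negP: (Hv p1); apply.
Qed.

Lemma Aw_imset w u (V : {set T1}) : Aw w u (f @: V) = Aw w u V.
Proof.
rewrite /Aw (reindex_onto (fun E1 : {set T1 * T1} => pf @: E1) (fun E2 : {set T2 * T2} => pf @^-1: E2)) /=; last first.
  move=> E2 /andP [sub _]; apply/setP => [[a b]]; apply/imsetP/idP.
    by move=> [p]; rewrite inE => pin ->.
  move=> ab; have := subsetP sub _ ab; rewrite inE /= => /andP [/imsetP [a1 _ ea] /imsetP [b1 _ eb]].
  by exists (a1, b1); rewrite ?inE /pf /= -?ea -?eb.
apply: eq_big => E1.
  have -> : pf @^-1: (pf @: E1) = E1.
    by apply/setP => p; rewrite inE mem_imset //; exact: pf_inj.
  rewrite eqxx andbT dagb_imset; congr (_ && _).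
  apply/idP/idP.
    move=> /subsetP sub; apply/subsetP => [[a b]] ab.
    have := sub _ (imset_f pf ab); rewrite !inE /= !mem_imset //.
  move=> /subsetP sub; apply/subsetP => p /imsetP [[a b] ab ->].
  by have := sub _ ab; rewrite !inE /= !mem_imset.
move=> _; rewrite srcs_imset !card_imset //; exact: pf_inj.
Qed.
End Relabel.

Definition acoef (w u : R) (n : nat) : R :=
  \big[Rplus/0%R]_(E : digraph n | is_dag E) (w ^ nedges E * u ^ nsources E)%R.

Lemma acoefE w u n : acoef w u n = Aw w u [set: 'I_n].
Proof.
rewrite /acoef /Aw; apply: eq_big => E.
  have -> : E \subset setX [set: 'I_n] [set: 'I_n] by apply/subsetP => p; rewrite !inE.
  by rewrite is_dagE.
move=> _; rewrite /nedges /nsources; congr (_ * _ ^ _)%R; apply: eq_card => v.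
by rewrite !inE.
Qed.

Lemma Aw_card (T : finType) w u (V : {set T}) : Aw w u V = acoef w u #|V|.
Proof.
rewrite acoefE -(Aw_imset (@enum_val_inj _ (mem V))); congr Aw.
apply/setP => y; apply/idP/imsetP.
  by move=> yV; exists (enum_rank_in yV y) => //; rewrite enum_rankK_in.
by move=> [i _ ->]; apply: enum_valP.
Qed.

Module P4.


Section Decomp.
Variables (T : finType) (x : T) (M : {set T}).
Hypothesis xM : x \notin M.

Definition J := ~: (x |: M).
Definition B1 := setX J J.
Definition B2 := setX M M.
Definition B3 := setX (x |: J) M.
Definition U := B1 :|: (B2 :|: B3).

Lemma inJ y : (y \in J) = (y != x) && (y \notin M).
Proof. by rewrite !inE negb_or. Qed.

Lemma inU a b : ((a, b) \in U) = (b != x) && (((a == x) || (a \in M)) ==> (b \in M)).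
Proof.
rewrite !inE /=.
case: (eqVneq a x) => [-> | ax]; case: (eqVneq b x) => [-> | bx];
  rewrite ?eqxx ?(negbTE xM) /=; by case: (a \in M); case: (b \in M).
Qed.

Definition desc (E : {set T * T}) := [set y | (y != x) && connect (rarc E) x y].

Definition Sfun (E : {set T * T}) : bool :=
  [&& E \subset U, dagb (E :&: B1), dagb (E :&: B2) &
      [forall y in srcs (E :&: B2) M, (x, y) \in E]].

Lemma glue (E : {set T * T}) : E \subset U -> dagb (E :&: B1) -> dagb (E :&: B2) -> dagb E.
Proof.
move=> /subsetP EU /dagbP D1 /dagbP D2; apply: dagbI => X /set0Pn [y0 y0X].
have EU' a b : (a, b) \in E -> (b != x) && (((a == x) || (a \in M)) ==> (b \in M)).
  by move=> ab; rewrite -inU; apply: EU.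
case: (boolP (X :&: J != set0)) => [XJ | ].
  have [v] := D1 _ XJ; rewrite inE => /andP [vX vJ] Hv; exists v => // a aX.
  apply/negP => av; have := EU' _ _ av; move: (vJ); rewrite inJ => /andP [vx /negbTE vM].
  rewrite vM vx /= implybF negb_or => /andP [ax aM].
  have aJ : a \in X :&: J by rewrite inE aX inJ ax aM.
  move/negP: (Hv a aJ); apply; rewrite inE av /B1 inE /=; apply/andP; split => //; by rewrite inJ ax.
rewrite negbK => XJ0.
case: (boolP (x \in X)) => xX.
  exists x => // a _; apply/negP => /EU'; by rewrite eqxx.
have XM : X != set0 by apply/set0Pn; exists y0.
have subM y : y \in X -> y \in M.
  move=> yX; apply: contraT => yM.
  have : y \in X :&: J by rewrite inE yX inJ yM andbT; apply: contraNneq xX => <-.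
  by move/eqP: XJ0 => XJ0; rewrite XJ0 inE.
have [v vX Hv] := D2 _ XM; exists v => // a aX; apply/negP => av.
by move/negP: (Hv a aX); apply; rewrite !inE av (subM _ aX) (subM _ vX).
Qed.

Lemma Sfun_char (E : {set T * T}) :
  ((dagb E && (x \in srcs E setT)) && (desc E == M)) = Sfun E.
Proof.
apply/idP/idP.
- move=> /andP [/andP [D xs] /eqP dM].
  move: xs; rewrite !inE /= => /forallP xs.
  have Ddesc y : (y \in M) = (y != x) && connect (rarc E) x y by rewrite -dM inE.
  apply/and4P; split.
  + apply/subsetP => [[a b]] ab; rewrite inU.
    apply/andP; split.
      by apply: contraTneq ab => ->; apply: xs.
    apply/implyP => /orP [/eqP ax | aM]; rewrite Ddesc.
      have bx : b != x by apply: contraTneq ab => ->; apply: xs.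
      by rewrite bx /=; apply: connect1; rewrite /rarc -ax.
    have bx : b != x by apply: contraTneq ab => ->; apply: xs.
    rewrite bx /=; move: aM; rewrite Ddesc => /andP [_ cxa].
    exact: (connect_trans cxa (connect1 (ab : rarc E a b))).
  + by apply: dagb_sub D; apply: subsetIl.
  + by apply: dagb_sub D; apply: subsetIl.
  + apply/forallP => y; apply/implyP; rewrite inE => /andP [yM /forallP ys].
    move: (yM); rewrite Ddesc => /andP [yx cxy].
    have [p [cxp epy]] := connect_last cxy yx.
    case: (eqVneq p x) => [<- // | px].
    have pM : p \in M by rewrite Ddesc px.
    by have := ys p; rewrite !inE /= pM yM (epy : (p, y) \in E).
- move=> /and4P [EU D1 D2 /forallP F].
  have D := glue EU D1 D2.
  have EU' a b : (a, b) \in E -> (b != x) && (((a == x) || (a \in M)) ==> (b \in M)).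
    by move=> ab; rewrite -inU; apply: (subsetP EU).
  have xs : x \in srcs E setT.
    rewrite !inE /=; apply/forallP => a; apply/negP => /EU'; by rewrite eqxx.
  rewrite D xs /=; apply/eqP/setP => y; rewrite inE.
  apply/idP/idP.
    move=> /andP [yx cxy].
    have : y \in x |: M.
      apply: (connect_fwd (A := mem (x |: M))) cxy; last by rewrite !inE eqxx.
      move=> u v uA uv; have := EU' _ _ uv; rewrite !inE => /andP [_ /implyP H].
      by rewrite H ?orbT //; move: uA; rewrite !inE.
    by rewrite !inE (negbTE yx).
  move=> yM; apply: contraT => ny.
  have : M :\: desc E != set0 by apply/set0Pn; exists y; rewrite !inE yM andbT.
  move=> /(dagbP D) [v]; rewrite !inE => /andP [nvd vM] Hv.
  have vx : v != x by apply: contraNneq xM => <-.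
  rewrite vx /= in nvd.
  case: (boolP (v \in srcs (E :&: B2) M)) => vs.
    have := implyP (F v) vs => xv.
    by rewrite (connect1 (xv : rarc E x v)) in nvd.
  move: vs; rewrite inE vM /= => /forallPn [a]; rewrite negbK !inE => /andP [av /andP [aM _]].
  case: (boolP (connect (rarc E) x a)) => cxa.
    by rewrite (connect_trans cxa (connect1 (av : rarc E a v))) in nvd.
  have ax : a != x by apply: contraNneq xM => <-.
  have := Hv a; rewrite !inE aM ax cxa /= => /(_ isT).
  by rewrite av.
Qed.
End Decomp.

End P4.
Import P4.


Lemma disjI (K : finType) (A B A' B' : {set K}) :
  A \subset A' -> B \subset B' -> A' :&: B' = set0 -> A :&: B = set0.
Proof.
move=> AA BB D; apply/eqP; rewrite -subset0 -D; exact: setISS.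
Qed.

Lemma setUI_l (K : finType) (E1 E2 A B : {set K}) :
  E1 \subset A -> E2 \subset B -> A :&: B = set0 -> (E1 :|: E2) :&: A = E1.
Proof.
move=> E1A E2B D; rewrite setIUl (setIidPl E1A).
by rewrite setIC (disjI (subxx A) E2B D) setU0.
Qed.

Lemma cardsU_disj (K : finType) (E1 E2 A B : {set K}) :
  E1 \subset A -> E2 \subset B -> A :&: B = set0 -> #|E1 :|: E2| = (#|E1| + #|E2|)%N.
Proof.
move=> E1A E2B D; by rewrite cardsU (disjI E1A E2B D) cards0 subn0.
Qed.

Lemma sum_subsets' (K : finType) (a : R) (Rs B : {set K}) : Rs \subset B ->
  \big[Rplus/0%R]_(F : {set K} | F \subset B) (if Rs \subset F then a ^ #|F| else 0)%R
  = (a ^ #|Rs| * (1 + a) ^ (#|B| - #|Rs|))%R.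
Proof.
move=> RB; rewrite -big_mkcondr -(sum_subsets a RB); apply: eq_bigl => F.
by rewrite andbC.
Qed.

Section Fact.
Variables (T : finType) (x : T) (M : {set T}).
Hypothesis xM : x \notin M.

Local Notation J := (P4.J x M).
Local Notation B1 := (P4.B1 x M).
Local Notation B2 := (P4.B2 M).
Local Notation B3 := (P4.B3 x M).

Lemma D123 : B1 :&: (B2 :|: B3) = set0.
Proof.
apply/setP => [[a b]]; rewrite !inE /=.
case: (eqVneq a x) => [-> | ax]; case: (eqVneq b x) => [-> | bx];
  rewrite ?eqxx ?(negbTE xM) /= ?andbF //; by case: (a \in M); case: (b \in M).
Qed.

Lemma D213 : B2 :&: (B1 :|: B3) = set0.
Proof.
apply/setP => [[a b]]; rewrite !inE /=.
case: (eqVneq a x) => [-> | ax]; case: (eqVneq b x) => [-> | bx];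
  rewrite ?eqxx ?(negbTE xM) /= ?andbF //; by case: (a \in M); case: (b \in M).
Qed.

Lemma D23 : B2 :&: B3 = set0.
Proof. by apply: (disjI (subxx _) _ D213); apply: subsetUr. Qed.

Section Term.
Variables (E1 E2 E3 : {set T * T}).
Hypotheses (h1 : E1 \subset B1) (h2 : E2 \subset B2) (h3 : E3 \subset B3).
Let E := E1 :|: (E2 :|: E3).

Lemma tE1 : E :&: B1 = E1.
Proof. apply: setUI_l h1 _ D123; exact: setUSS. Qed.

Lemma tE2 : E :&: B2 = E2.
Proof.
rewrite /E setUCA; apply: setUI_l h2 _ D213; exact: setUSS.
Qed.

Lemma tEx y : ((x, y) \in E) = ((x, y) \in E3).
Proof.
rewrite !inE.
have -> : ((x, y) \in E1) = false.
  apply/negP => /(subsetP h1); by rewrite !inE eqxx.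
have -> : ((x, y) \in E2) = false.
  apply/negP => /(subsetP h2); by rewrite !inE (negbTE xM).
by [].
Qed.

Lemma tcard : #|E| = (#|E1| + (#|E2| + #|E3|))%N.
Proof.
rewrite (cardsU_disj h1 (setUSS h2 h3) D123).
by rewrite (cardsU_disj h2 h3 D23).
Qed.

Lemma tU : E \subset U x M.
Proof. by rewrite /U /E; apply: setUSS h1 (setUSS h2 h3). Qed.

Lemma tsrcs : [forall y in srcs E2 M, (x, y) \in E3] ->
  srcs E setT = x |: srcs E1 J.
Proof.
move=> /forallP F.
have EU a b : (a, b) \in E -> (b != x) && (((a == x) || (a \in M)) ==> (b \in M)).
  by move=> ab; rewrite -(inU xM); apply: (subsetP tU).
apply/setP => y; rewrite !inE /=.
case: (eqVneq y x) => [-> | yx] /=.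
  apply/forallP => a; apply/negP => /EU; by rewrite eqxx.
case: (boolP (y \in M)) => yM /=.
  apply/negP => /forallP H.
  case: (boolP (y \in srcs E2 M)) => ys.
    have := implyP (F y) ys => xy.
    by move/negP: (H x); apply; rewrite /E !inE xy !orbT.
  move: ys; rewrite inE yM /= => /forallPn [a]; rewrite negbK => ay.
  by move/negP: (H a); apply; rewrite /E !inE ay orbT.
apply/forallP/forallP => H a; have := H a; apply: contra.
  by rewrite /E inE => ->.
rewrite /E !inE => /orP [// | /orP [] ay].
  by have := subsetP h2 _ ay; rewrite inE /= (negbTE yM) andbF.
by have := subsetP h3 _ ay; rewrite inE /= (negbTE yM) andbF.
Qed.
End Term.


Lemma sum_Sfun (w t : R) :
  \big[Rplus/0%R]_(E | Sfun x M E) (w ^ #|E| * t ^ (#|srcs E setT|).-1)%R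
  = (Aw w t J * \big[Rplus/0%R]_(E2 : {set T * T} | (E2 \subset setX M M) && dagb E2)
      (w ^ #|E2| * (w ^ #|srcs E2 M| * (1 + w) ^ ((#|J|).+1 * #|M| - #|srcs E2 M|)%N)))%R.
Proof.
rewrite /Sfun big_mkcondr /= /U sum_split; last exact: D123.
pose Rs (E2 : {set T * T}) := setX [set x] (srcs E2 M).
transitivity (\big[Rplus/0%R]_(E1 : {set T * T} | E1 \subset B1)
   \big[Rplus/0%R]_(E2 : {set T * T} | E2 \subset B2)
   \big[Rplus/0%R]_(E3 : {set T * T} | E3 \subset B3)
   ((if dagb E1 then w ^ #|E1| * t ^ #|srcs E1 J| else 0) *
    ((if dagb E2 then w ^ #|E2| else 0) * (if Rs E2 \subset E3 then w ^ #|E3| else 0)))%R).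
  apply: eq_bigr => E1 h1; rewrite sum_split; last exact: D23.
  apply: eq_bigr => E2 h2; apply: eq_bigr => E3 h3.
  rewrite (tE1 h1 h2 h3) (tE2 h1 h2 h3).
  have -> : [forall y in srcs E2 M, (x, y) \in E1 :|: (E2 :|: E3)] =
            (Rs E2 \subset E3).
    apply/forallP/subsetP.
      move=> H [a b]; rewrite !inE /= => /andP [/eqP -> bs].
    have bs' : b \in srcs E2 M by rewrite inE.
    by have := implyP (H b) bs'; rewrite (tEx E3 h1 h2).
    move=> H y; apply/implyP => ys; rewrite (tEx E3 h1 h2); apply: H.
    by rewrite !inE eqxx /=; move: ys; rewrite inE.
  case D1: (dagb E1); case D2: (dagb E2); case F: (Rs E2 \subset E3) => /=; try lra.
  rewrite (tcard h1 h2 h3) (tsrcs h1 h2 h3); last first.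
    apply/forallP => y; apply/implyP => ys; apply: (subsetP F); rewrite !inE eqxx /=.
    by move: ys; rewrite inE.
  rewrite cardsU1.
  have -> : x \notin srcs E1 J by rewrite !inE eqxx.
  by rewrite /= !pow_add; ring.
transitivity ((\big[Rplus/0%R]_(E1 : {set T * T} | E1 \subset B1)
     (if dagb E1 then w ^ #|E1| * t ^ #|srcs E1 J| else 0)) *
   \big[Rplus/0%R]_(E2 : {set T * T} | E2 \subset B2)
     ((if dagb E2 then w ^ #|E2| else 0) *
      \big[Rplus/0%R]_(E3 : {set T * T} | E3 \subset B3)
          (if Rs E2 \subset E3 then w ^ #|E3| else 0)))%R.
  rewrite big_distrl /=; apply: eq_bigr => E1 _; rewrite big_distrr /=.
  apply: eq_bigr => E2 _; by rewrite !big_distrr.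
congr (_ * _)%R; first by rewrite /Aw big_mkcondr.
rewrite big_mkcondr /=; apply: eq_bigr => E2 h2.
case: (dagb E2); last by rewrite Rmult_0_l.
congr (_ * _)%R; rewrite sum_subsets'; last first.
  apply/subsetP => [[a b]]; rewrite !inE /= => /andP [/eqP -> bs].
  by rewrite eqxx; move: bs => /andP [-> _].
rewrite cardsX cards1 mul1n cardsX cardsU1.
by have -> : x \notin J by rewrite !inE eqxx.
Qed.

End Fact.


Lemma comb (T : finType) (w t : R) :
  \big[Rplus/0%R]_(E : {set T * T} | dagb E)
     \big[Rplus/0%R]_(x | x \in srcs E setT) (w ^ #|E| * t ^ (#|srcs E setT|).-1)%R
  = \big[Rplus/0%R]_(M : {set T}) \big[Rplus/0%R]_(x | x \notin M)
      (Aw w t (J x M) * \big[Rplus/0%R]_(E2 : {set T * T} | (E2 \subset setX M M) && dagb E2)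
      (w ^ #|E2| * (w ^ #|srcs E2 M| * (1 + w) ^ ((#|J x M|).+1 * #|M| - #|srcs E2 M|)%N)))%R.
Proof.
rewrite (exchange_big_dep xpredT) //=.
rewrite [RHS](exchange_big_dep xpredT) //=.
apply: eq_bigr => x _.
rewrite (partition_big (fun E => desc x E) (fun M => x \notin M)) /=; last first.
  by move=> E _; rewrite inE eqxx.
apply: eq_bigr => M xM.
rewrite -(sum_Sfun xM); apply: eq_bigl => E.
exact: Sfun_char.
Qed.


Lemma conv (T : finType) (M : {set T}) (w : R) (hw : (1 + w <> 0)%R) k :
  \big[Rplus/0%R]_(E2 : {set T * T} | (E2 \subset setX M M) && dagb E2)
      (w ^ #|E2| * (w ^ #|srcs E2 M| * (1 + w) ^ (k.+1 * #|M| - #|srcs E2 M|)%N))%R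
  = ((1 + w) ^ (k.+1 * #|M|) * Aw w (w / (1 + w)) M)%R.
Proof.
rewrite /Aw big_distrr /=; apply: eq_bigr => E2 _.
have sle : (#|srcs E2 M| <= k.+1 * #|M|)%N.
  apply: leq_trans (leq_pmull _ _) => //.
  by apply: subset_leq_card; apply/subsetP => y; rewrite inE => /andP [].
set s := #|srcs E2 M|.
rewrite -{2}(subnK sle) pow_add /Rdiv Rpow_mult_distr pow_inv.
have : ((1 + w) ^ s <> 0)%R by apply: pow_nonzero.
move=> hs; rewrite -[#|srcs E2 M|]/s; by field.
Qed.

Lemma sum_notin n (M : {set 'I_n}) (c : R) :
  \big[Rplus/0%R]_(x | x \notin M) c = (INR (n - #|M|) * c)%R.
Proof.
rewrite big_const iter_Rplus; congr (INR _ * _)%R.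
have e := cardsC M; rewrite card_ord in e.
have -> : (n - #|M|)%N = #|~: M|.
  apply/eqP; rewrite -(eqn_add2l #|M|) e subnKC //.
  by rewrite -[X in (_ <= X)%N](card_ord n) max_card.
apply: eq_card => x; by rewrite !inE.
Qed.

Lemma sum_card n (h : nat -> R) :
  \big[Rplus/0%R]_(M : {set 'I_n}) h #|M| =
  \big[Rplus/0%R]_(m < n.+1) (INR 'C(n, m) * h m)%R.
Proof.
rewrite (partition_big (fun M : {set 'I_n} => (inord #|M| : 'I_n.+1)) xpredT) //=.
apply: eq_bigr => m _.
have cM (M : {set 'I_n}) : (#|M| < n.+1)%N.
  by rewrite ltnS; apply: leq_trans (max_card _) _; rewrite card_ord.
transitivity (\big[Rplus/0%R]_(M : {set 'I_n} | #|M| == m) h m).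
  apply: eq_big => M.
    by rewrite -(inj_eq val_inj) /= inordK.
  by move=> /eqP <-; rewrite inordK.
rewrite big_const iter_Rplus; congr (INR _ * _)%R.
have := card_draws 'I_n m; rewrite card_ord => <-; apply: eq_card => M; by rewrite !inE.
Qed.

Lemma comb_n (n : nat) (w t : R) (hw : (0 < w)%R) :
  \big[Rplus/0%R]_(E : digraph n | is_dag E)
     \big[Rplus/0%R]_(x | x \in srcs E setT) (w ^ #|E| * t ^ (#|srcs E setT|).-1)%R
  = \big[Rplus/0%R]_(m < n.+1) (INR 'C(n, m) * (INR (n - m) *
      (acoef w t (n - m.+1) * ((1 + w) ^ ((n - m) * m) * acoef w (w / (1 + w)) m))))%R.
Proof.
have hw' : (1 + w <> 0)%R by lra.
rewrite (eq_bigl (fun E => dagb E)); last by move=> E; rewrite is_dagE.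
rewrite comb -(@sum_card n (fun m => (INR (n - m) *
      (acoef w t (n - m.+1) * ((1 + w) ^ ((n - m) * m) * acoef w (w / (1 + w)) m))))%R).
apply: eq_bigr => M _.
rewrite -sum_notin; apply: eq_bigr => x xM.
have e := cardsC (x |: M); rewrite card_ord cardsU1 xM /= in e.
have cJ : #|J x M| = (n - #|M|.+1)%N.
  rewrite /J; move: e; move: #|~: (x |: M)| #|M| => k a e.
  by rewrite -e add1n addKn.
have nM : (#|M| < n)%N.
  move: e; move: #|~: (x |: M)| #|M| => k a e.
  by rewrite -e add1n addSn ltnS leq_addr.
rewrite conv // Aw_card Aw_card cJ.
by rewrite -subSn // subSS.
Qed.


Lemma is_RInt_pow (s : nat) (u : R) :
  is_RInt (fun t => t ^ s)%R 0 u (u ^ s.+1 / INR s.+1)%R.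
Proof.
have hs : INR s.+1 <> 0%R by apply: not_0_INR.
have := @is_RInt_derive R_CompleteNormedModule (fun t => / INR s.+1 * t ^ s.+1)%R (fun t => t ^ s)%R 0 u.
have e : minus (/ INR s.+1 * u ^ s.+1) (/ INR s.+1 * 0 ^ s.+1) = (u ^ s.+1 / INR s.+1)%R.
  rewrite /minus /plus /opp /= Rmult_0_l; lra.
rewrite e; apply.
  move=> t _.
  have := is_derive_scal (fun t => t ^ s.+1)%R t (/ INR s.+1)%R _ (is_derive_pow (fun t => t) s.+1 t 1%R (is_derive_id t)).
  have -> : (/ INR s.+1 * (INR s.+1 * 1 * t ^ Init.Nat.pred s.+1))%R = (t ^ s)%R.
    rewrite /=; field; exact hs.
  by [].
move=> t _; apply: ex_derive_continuous.
exists (INR s * 1 * t ^ Init.Nat.pred s)%R.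
exact: (is_derive_pow (fun t => t) s t 1%R (is_derive_id t)).
Qed.

Lemma is_RInt_big (I : Type) (r : seq I) (P : pred I) (f : I -> R -> R) (v : I -> R) a b :
  (forall i, P i -> is_RInt (f i) a b (v i)) ->
  is_RInt (fun t => \big[Rplus/0%R]_(i <- r | P i) f i t) a b (\big[Rplus/0%R]_(i <- r | P i) v i).
Proof.
move=> H; elim: r => [|i r IH].
  rewrite big_nil; apply: (is_RInt_ext (fun _ => 0%R)).
    by move=> t _; rewrite big_nil.
  have := @is_RInt_const R_CompleteNormedModule a b 0%R.
  by rewrite /scal /= /mult /= Rmult_0_r.
rewrite big_cons; case Pi: (P i).
  apply: (is_RInt_ext (fun t => plus (f i t) (\big[Rplus/0%R]_(j <- r | P j) f j t))).
    by move=> t _; rewrite big_cons Pi.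
  exact: is_RInt_plus (H i Pi) IH.
apply: (is_RInt_ext (fun t => \big[Rplus/0%R]_(j <- r | P j) f j t)) => //.
by move=> t _; rewrite big_cons Pi.
Qed.

Lemma is_RInt_scalR (f : R -> R) (a b k v : R) :
  is_RInt f a b v -> is_RInt (fun t => k * f t)%R a b (k * v)%R.
Proof. exact: is_RInt_scal. Qed.

Lemma is_RInt_scalR' (f : R -> R) (a b k v : R) :
  is_RInt f a b v -> is_RInt (fun t => f t * k)%R a b (v * k)%R.
Proof.
move=> H; have := is_RInt_scalR (k := k) H; rewrite Rmult_comm.
apply: is_RInt_ext => t _; exact: Rmult_comm.
Qed.

Lemma acoef_ex (w : R) (j : nat) (u : R) : ex_RInt (fun t => acoef w t j) 0 u.
Proof.
eexists; apply: is_RInt_big => E _.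
apply: is_RInt_scalR; exact: is_RInt_pow.
Qed.

Definition Iv (w : R) (j : nat) (u : R) := RInt (fun t => acoef w t j) 0 u.

Lemma acoef_RInt w j u : is_RInt (fun t => acoef w t j) 0 u (Iv w j u).
Proof. exact: RInt_correct (acoef_ex w j u). Qed.

Lemma nsourcesE n (E : digraph n) : nsources E = #|srcs E setT|.
Proof. by apply: eq_card => v; rewrite !inE. Qed.

Lemma integrated (n : nat) (w u : R) (hw : (0 < w)%R) : (0 < n)%N ->
  acoef w u n = \big[Rplus/0%R]_(m < n.+1) (INR 'C(n, m) * (INR (n - m) *
      (Iv w (n - m.+1) u * ((1 + w) ^ ((n - m) * m) * acoef w (w / (1 + w)) m))))%R.
Proof.
move=> n0.
pose L t := \big[Rplus/0%R]_(E : digraph n | is_dag E)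
     \big[Rplus/0%R]_(x | x \in srcs E setT) (w ^ #|E| * t ^ (#|srcs E setT|).-1)%R.
have H1 : is_RInt L 0 u (acoef w u n).
  apply: is_RInt_big => E DE.
  have sp : (0 < #|srcs E setT|)%N.
    rewrite card_gt0; apply: dagb_src; first by rewrite -is_dagE.
    apply/set0Pn; exists (Ordinal n0); by rewrite inE.
  apply: (is_RInt_ext (fun t => INR #|srcs E setT| * (w ^ #|E| * t ^ (#|srcs E setT|).-1))%R).
    by move=> t _; rewrite big_const iter_Rplus.
  have hs : INR #|srcs E setT| <> 0%R by apply: not_0_INR; move: sp; case: #|_|.
  have := is_RInt_scalR (k := (INR #|srcs E setT| * w ^ #|E|)%R) (is_RInt_pow (s := (#|srcs E setT|).-1) (u := u)).
  rewrite prednK // nsourcesE /nedges.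
  have -> : (INR #|srcs E setT| * w ^ #|E| * (u ^ #|srcs E setT| / INR #|srcs E setT|))%R
          = (w ^ #|E| * u ^ #|srcs E setT|)%R by field.
  apply: is_RInt_ext => t _; rewrite /=; ring.
have H2 : is_RInt L 0 u (\big[Rplus/0%R]_(m < n.+1) (INR 'C(n, m) * (INR (n - m) *
      (Iv w (n - m.+1) u * ((1 + w) ^ ((n - m) * m) * acoef w (w / (1 + w)) m))))%R).
  apply: (is_RInt_ext (fun t => \big[Rplus/0%R]_(m < n.+1) (INR 'C(n, m) * (INR (n - m) *
      (acoef w t (n - m.+1) * ((1 + w) ^ ((n - m) * m) * acoef w (w / (1 + w)) m))))%R)).
    by move=> t _; rewrite /L comb_n.
  apply: is_RInt_big => m _.
  apply: is_RInt_scalR; apply: is_RInt_scalR.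
  eapply (is_RInt_scalR' (f := fun t => acoef w t (n - m.+1))); first exact: acoef_RInt.
by rewrite -(is_RInt_unique _ _ _ _ H1) (is_RInt_unique _ _ _ _ H2).
Qed.


Lemma binC2 k m : 'C((k+m).+1, 2) = ('C(k,2) + 'C(m,2) + k.+1 * m + k)%N.
Proof.
elim: k => [|k IH]; first by rewrite add0n binS bin1 bin0n; lia.
rewrite addSn binS IH bin1 [in RHS]binS bin1; lia.
Qed.

Definition Nf (w : R) (k : nat) : R := ((1 + w) ^ 'C(k, 2) * INR k`!)%R.

Lemma INR_fact_nz k : INR k`! <> 0%R.
Proof. apply: not_0_INR; have := fact_gt0 k; lia. Qed.

Lemma coef_id (w : R) (hw : (0 < w)%R) (k m : nat) (Ik am : R) :
  let n := (k + m).+1 in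
  (INR 'C(n, m) * (INR (n - m) * (Ik * ((1 + w) ^ ((n - m) * m) * am))) * / Nf w n)%R
  = ((/ (1 + w)) ^ k / Nf w k * Ik * (am / Nf w m))%R.
Proof.
move=> n.
have nm : (n - m)%N = k.+1 by rewrite /n; lia.
have hf : n`! = ('C(n, m) * (m`! * (k.+1 * k`!)))%N.
  rewrite -factS -nm bin_fact //; rewrite /n; lia.
have hC : (0 < 'C(n, m))%N by rewrite bin_gt0 /n; lia.
have hq : (1 + w <> 0)%R by lra.
rewrite /Nf hf /n binC2 -/n nm !mult_INR !pow_add pow_inv.
have := pow_nonzero (1 + w) 'C(k, 2) hq.
have := pow_nonzero (1 + w) 'C(m, 2) hq.
move: (k.+1 * m)%N => e.
have := pow_nonzero (1 + w) e hq.
have := pow_nonzero (1 + w) k hq.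
have := @INR_fact_nz k; have := @INR_fact_nz m.
have : INR 'C(n, m) <> 0%R by apply: not_0_INR; lia.
have : INR k.+1 <> 0%R by apply: not_0_INR.
move=> *; field; repeat split; try assumption; apply: pow_nonzero; lra.
Qed.


Lemma fps_inv_list_size (b : fps) n : size (fps_inv_list b n) = n.+1.
Proof. by elim: n => //= n IH; rewrite size_rcons IH. Qed.

Lemma fps_inv_list_nth (b : fps) n k : (k <= n)%N -> nth 0%R (fps_inv_list b n) k = fps_inv b k.
Proof.
elim: n => [|n IH]; first by rewrite leqn0 => /eqP ->.
rewrite leq_eqVlt => /orP [/eqP -> // | ].
rewrite ltnS => kn /=; rewrite nth_rcons fps_inv_list_size ltnS kn; exact: IH.
Qed.

Lemma fps_inv_unique (b P : fps) : b 0%N = 1%R ->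
  (forall n, fps_mul b P n = fps_one n) -> forall n, fps_inv b n = P n.
Proof.
move=> b0 HP n; elim: n {-2}n (leqnn n) => [|n IH] k.
  rewrite leqn0 => /eqP ->; have := HP 0%N.
  rewrite /fps_mul big_ord_recl big_ord0 /= b0 /fps_one => h.
  rewrite /fps_inv /= b0 Rinv_1; rewrite subn0 in h; lra.
rewrite leq_eqVlt => /orP [/eqP -> | ]; last by rewrite ltnS; apply: IH.
have e2 : fps_inv b n.+1 = (- / b 0%N *
      \big[Rplus/0%R]_(k < n.+1) (b k.+1 * nth 0%R (fps_inv_list b n) (n - k)))%R.
  by rewrite /fps_inv /= nth_rcons fps_inv_list_size ltnn eqxx.
rewrite e2 b0 Rinv_1.
have := HP n.+1; rewrite /fps_mul big_ord_recl /= b0 subn0.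
have -> : \big[Rplus/0%R]_(i < n.+1) (b (bump 0 i) * P (n.+1 - bump 0 i)%N)%R =
          \big[Rplus/0%R]_(k < n.+1) (b k.+1 * nth 0%R (fps_inv_list b n) (n - k))%R.
  apply: eq_bigr => i _; rewrite fps_inv_list_nth ?leq_subr // IH ?leq_subr //.
move=> e; rewrite /fps_one in e; move: e; set S := (\big[Rplus/0%R]_(k < n.+1) _); clearbody S => e; lra.
Qed.


Lemma DAGE w u n : DAG w u n = (acoef w u n / Nf w n)%R.
Proof. by []. Qed.

Lemma Hcoef w u k : H w u k.+1 = ((/ (1 + w)) ^ k / Nf w k * Iv w k u)%R.
Proof.
rewrite /H /fps_zmul /fps_int /fps_scale.
apply: is_RInt_unique.
apply: (is_RInt_ext (fun t => ((/ (1 + w)) ^ k / Nf w k) * acoef w t k)%R).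
  move=> t _; rewrite /= DAGE /Rdiv; ring.
eapply (is_RInt_scalR (f := fun t => acoef w t k)); exact: acoef_RInt.
Qed.

Lemma acoef0 w u : acoef w u 0 = 1%R.
Proof.
rewrite /acoef (big_pred1 set0).
  have -> : nsources (set0 : digraph 0) = 0%N.
    by apply/eqP; rewrite -leqn0 -[X in (_ <= X)%N](card_ord 0) max_card.
  by rewrite /nedges cards0 /=; lra.
move=> E; apply/idP/idP.
  move=> _; apply/eqP/setP => [[[a ha] b]]; exfalso; have := ha; by rewrite ltn0.
by move=> _; apply/forallP => [[a ha]]; exfalso; have := ha; by rewrite ltn0.
Qed.

Lemma sum_sub (n : nat) (F G : 'I_n -> R) :
  \big[Rplus/0%R]_(i < n) (F i - G i)%R =
  (\big[Rplus/0%R]_(i < n) F i - \big[Rplus/0%R]_(i < n) G i)%R.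
Proof.
rewrite /Rminus big_split /=; congr (_ + _)%R.
elim/big_rec2: _ => [|i x y _ ->]; lra.
Qed.

Section Main.
Variables (w : R) (hw : (0 < w)%R).

Lemma mainA u n : DAG w u n = (fps_one n + fps_mul (H w u) (DAG w (w / (1 + w))) n)%R.
Proof.
have H0 : H w u 0%N = 0%R by [].
case: n => [|n].
  rewrite DAGE (acoef0 w u) /fps_one /fps_mul big_ord_recl big_ord0 /= /Nf bin0n /=; lra.
rewrite DAGE (integrated u hw) // /fps_one /fps_mul [in RHS]big_ord_recl.
have H0' : H w u (nat_of_ord (@ord0 n.+1)) = 0%R by [].
rewrite H0' Rmult_0_l !Rplus_0_l [in LHS]big_ord_recr /= subnn Rmult_0_l Rmult_0_r Rplus_0_r.
rewrite (reindex_inj rev_ord_inj) /= /Rdiv big_distrl /=.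
apply: eq_bigr => k _.
have -> : fps_int (fun t => fps_scale (/ (1 + w)) (DAG w t)) 0 u (0 + k)%N = ((/ (1 + w)) ^ k / Nf w k * Iv w k u)%R by rewrite add0n; exact: Hcoef.
rewrite DAGE /bump /= add1n.
move: (nat_of_ord k) (ltn_ord k) => {}k hk.
have [m ->] : exists m, n = (k + m)%N by exists (n - k)%N; lia.
have -> : ((k + m).+1 - k.+1)%N = m by lia.
have -> : ((k + m).+1 - m.+1)%N = k by lia.
exact: coef_id.
Qed.

Lemma invP : forall n, fps_inv (fps_sub fps_one (H w (w / (1 + w)))) n = DAG w (w / (1 + w)) n.
Proof.
apply: fps_inv_unique; first by rewrite /fps_sub /=; lra.
move=> n; rewrite /fps_mul /fps_sub.
have -> : \big[Rplus/0%R]_(k < n.+1)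
     ((fps_one k - H w (w / (1 + w)) k) * DAG w (w / (1 + w)) (n - k)%N)%R
   = \big[Rplus/0%R]_(k < n.+1)
     (fps_one k * DAG w (w / (1 + w)) (n - k)%N - H w (w / (1 + w)) k * DAG w (w / (1 + w)) (n - k)%N)%R.
  by apply: eq_bigr => k _; ring.
rewrite sum_sub.
have -> : \big[Rplus/0%R]_(k < n.+1) (fps_one k * DAG w (w / (1 + w)) (n - k)%N)%R
   = DAG w (w / (1 + w)) n.
  rewrite big_ord_recl big1 /= ?subn0; first by lra.
  by move=> i _; rewrite /fps_one /=; lra.
have := mainA (w / (1 + w)) n; rewrite /fps_mul => e.
move: e; set S := (\big[Rplus/0%R]_(k < n.+1) _); clearbody S => e; lra.
Qed.
End Main.

Unset Implicit Arguments.

Theorem lemma10 (w : R) (hw : (0 < w)%R) (u : R) :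
  DAG w u =
  fps_add fps_one
    (fps_div (H w u) (fps_sub fps_one (H w (w / (1 + w))%R))).
Proof.
apply: functional_extensionality => n.
rewrite /fps_add /fps_div (mainA hw u n) /fps_mul; congr (_ + _)%R.
apply: eq_bigr => k _; by rewrite invP.
Qed.
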